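(* Let $n\ge 2$ and $F_n=\langle x_1,\dots,x_n\rangle$. Let $S=\{x_jx_ix_j^{-1},\ x_j^{-1}x_ix_j : i,j\in\{1,\dots,n\},\ i\ne j\}$ (a set of $2n(n-1)$ elements), let $G=\langle S\rangle$, and for each $s\in S$ let $G_s=\langle S\setminus\{s\}\rangle$. Then the coset incidence system $\Gamma=\Gamma(G;(G_s)_{s\in S})$ is a residually connected and flag-transitive geometry. Moreover, the group $K=\langle\phi_1,\phi_\rho,\phi_\tau\rangle\le\mathrm{Aut}(F_n)$, where $\phi_1(x_1,\dots,x_n)=(x_1^{-1},x_2,\dots,x_n)$, $\phi_\rho(x_1,\dots,x_n)=(x_2,\dots,x_n,x_1)$ and $\phi_\tau(x_1,\dots,x_n)=(x_2,x_1,x_3,\dots,x_n)$ (so $K\cong C_2^n\rtimes\mathrm{Sym}(n)$), acts on $\Gamma$ as a group of correlations: each $\phi\in K$ satisfies $\phi(G)=G$, permutes the subgroups $G_s$, and induces the correlation $G_sg\mapsto \phi(G_s)\phi(g)$ of $\Gamma$.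
   Context: An incidence system is a quadruple $\Gamma=(X,*,t,I)$ with $X$ a set, $I$ a finite type set, $t:X\to I$ surjective, and $*$ a symmetric relation with no two elements of the same type incident. A flag is a set of pairwise incident elements; a chamber is a flag containing an element of each type; $\Gamma$ is a geometry if every flag is contained in a chamber. The residue of a flag $F$ is the incidence system (induced types and incidence) of elements not in $F$ incident with all elements of $F$. A geometry is residually connected if the incidence graph of every residue of rank at least two is connected (the residue of the empty flag is $\Gamma$ itself). A correlation of $\Gamma$ is a permutation $\alpha$ of $X$ with $t(x)=t(y)\iff t(\alpha x)=t(\alpha y)$ and $x*y\iff \alpha x*\alpha y$. Coset incidence system: for a group $G$ with subgroups $(G_i)_{i\in I}$, $\Gamma(G;(G_i)_{i\in I})$ has elements the right cosets $G_ig$, type $t(G_ig)=i$, and $G_ig_1*G_jg_2$ iff $G_ig_1\cap G_jg_2\ne\emptyset$; $G$ acts by right multiplication. It is flag-transitive if $G$ is transitive on the flags of type $J$ for every $J\subseteq I$. *)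

(* Defs.v *)
From mathcomp Require Import all_boot.
From mathcomp Require Import perm.
From Stdlib Require Import Relation_Operators.

Set Implicit Arguments.
Unset Strict Implicit.
Unset Printing Implicit Defensive.

(* Generator x_{i+1} is the letter (i, false); its inverse is (i, true).     *)

Definition letter (n : nat) := ('I_n * bool)%type.

Definition flip n (a : letter n) : letter n := (a.1, ~~ a.2).

Definition reduced n (w : seq (letter n)) : bool :=
  sorted (fun a b => b != flip a) w.

Definition push n (a : letter n) (s : seq (letter n)) : seq (letter n) :=
  if s is b :: s' then (if b == flip a then s' else a :: s) else [:: a].

Definition reduce n (w : seq (letter n)) : seq (letter n) := foldr (@push n) [::] w.

Lemma reduce_reduced n (w : seq (letter n)) : reduced (reduce w).
Proof.
elim: w => [|a w IH] //=.
rewrite /push; case E: (reduce w) => [|b s] //=.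
case: ifP => Hb.
  by move: IH; rewrite E /reduced /=; case: s {E} => //= c s /andP [].
by move: IH; rewrite E /reduced /= Hb.
Qed.

Definition FG (n : nat) := {w : seq (letter n) | reduced w}.

Definition fmul n (u v : FG n) : FG n :=
  exist _ (reduce (sval u ++ sval v)) (reduce_reduced _).
Definition finv n (u : FG n) : FG n :=
  exist _ (reduce (rev (map (@flip n) (sval u)))) (reduce_reduced _).
Definition fone n : FG n := exist _ [::] isT.

Definition xgen n (k : nat) : FG n :=
  match insub k with
  | Some i => exist _ [:: (i, false)] isT
  | None => fone n
  end.

Definition ext n (f : 'I_n -> FG n) (w : FG n) : FG n :=
  foldr (fun a acc => fmul (if a.2 then finv (f a.1) else f a.1) acc)
        (fone n) (sval w).

Inductive gen n (A : FG n -> Prop) : FG n -> Prop :=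
| gen_in x : A x -> gen A x
| gen_one : gen A (fone n)
| gen_mul x y : gen A x -> gen A y -> gen A (fmul x y)
| gen_inv x : gen A x -> gen A (finv x).

Definition rcoset n (H : FG n -> Prop) (g : FG n) : FG n -> Prop :=
  fun x => exists h, H h /\ x = fmul h g.

Definition fimg n (phi : FG n -> FG n) (A : FG n -> Prop) : FG n -> Prop :=
  fun y => exists x, A x /\ y = phi x.

(* The set S, indexed by triples (i, j, b) with i <> j:                      *)
(* (this indexing is a bijection onto S, which has 2n(n-1) elements).        *)

Definition sidx (n : nat) := {p : 'I_n * 'I_n * bool | p.1.1 != p.1.2}.

Definition gx n (i : 'I_n) : FG n := exist _ [:: (i, false)] isT.

Definition selt n (s : sidx n) : FG n :=
  let: (i, j, b) := sval s in
  if b then fmul (finv (gx j)) (fmul (gx i) (gx j))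
  else fmul (gx j) (fmul (gx i) (finv (gx j))).

Definition Sset n : FG n -> Prop := fun x => exists s : sidx n, x = selt s.

Definition Ggrp n : FG n -> Prop := gen (@Sset n).

Definition Gsub n (s : sidx n) : FG n -> Prop :=
  gen (fun x => Sset x /\ x <> selt s).

Definition coset_elt n (I : Type) (G : FG n -> Prop) (H : I -> FG n -> Prop) :=
  {p : I * (FG n -> Prop) | exists g, G g /\ p.2 = rcoset (H p.1) g}.

Definition ctyp n I G H (x : @coset_elt n I G H) : I := (sval x).1.
Definition ccos n I G H (x : @coset_elt n I G H) : FG n -> Prop := (sval x).2.

Definition cinc n I G H (x y : @coset_elt n I G H) : Prop :=
  ctyp x <> ctyp y /\ exists z, ccos x z /\ ccos y z.

Section Incidence.
Variables (X I : Type) (typ : X -> I) (inc : X -> X -> Prop).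

Definition is_flag (F : X -> Prop) : Prop :=
  forall x y, F x -> F y -> x <> y -> inc x y.

Definition is_chamber (F : X -> Prop) : Prop :=
  is_flag F /\ forall i, exists x, F x /\ typ x = i.

Definition is_geometry : Prop :=
  forall F, is_flag F -> exists C, is_chamber C /\ forall x, F x -> C x.

Definition ftypes (F : X -> Prop) (i : I) : Prop := exists x, F x /\ typ x = i.

Definition residue (F : X -> Prop) (x : X) : Prop :=
  ~ F x /\ forall y, F y -> inc x y.

(* the residue of F has rank >= 2 (its type set is I minus the types of F) *)
Definition residue_rank_ge2 (F : X -> Prop) : Prop :=
  exists i j, i <> j /\ ~ ftypes F i /\ ~ ftypes F j.

Definition residue_connected (F : X -> Prop) : Prop :=
  forall x y, residue F x -> residue F y ->
    clos_refl_trans X (fun a b => residue F a /\ residue F b /\ inc a b) x y.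

Definition residually_connected : Prop :=
  forall F, is_flag F -> residue_rank_ge2 F -> residue_connected F.

Definition is_correlation (alpha : X -> X) : Prop :=
  bijective alpha /\
  (forall x y, typ x = typ y <-> typ (alpha x) = typ (alpha y)) /\
  (forall x y, inc x y <-> inc (alpha x) (alpha y)).

End Incidence.

Definition rshift n (C : FG n -> Prop) (h : FG n) : FG n -> Prop :=
  fun z => exists c, C c /\ z = fmul c h.

Definition flag_transitive n I (G : FG n -> Prop) (H : I -> FG n -> Prop) : Prop :=
  forall F1 F2 : @coset_elt n I G H -> Prop,
    is_flag (@cinc n I G H) F1 -> is_flag (@cinc n I G H) F2 ->
    (forall i, ftypes (@ctyp n I G H) F1 i <-> ftypes (@ctyp n I G H) F2 i) ->
    exists h, G h /\
      forall x y, F1 x -> F2 y -> ctyp x = ctyp y -> ccos y = rshift (ccos x) h.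

Definition phi1 n : FG n -> FG n :=
  ext (fun i : 'I_n => if val i == 0 then finv (gx i) else gx i).
Definition phirho n : FG n -> FG n :=
  ext (fun i : 'I_n => xgen n ((val i).+1 %% n)).
Definition phitau n : FG n -> FG n :=
  ext (fun i : 'I_n => xgen n (if val i == 0 then 1 else if val i == 1 then 0 else val i)).

Inductive Kgrp n : (FG n -> FG n) -> Prop :=
| K_phi1 : Kgrp (@phi1 n)
| K_phirho : Kgrp (@phirho n)
| K_phitau : Kgrp (@phitau n)
| K_id : Kgrp id
| K_comp f g : Kgrp f -> Kgrp g -> Kgrp (f \o g)
| K_inv f g : Kgrp f -> cancel f g -> cancel g f -> Kgrp g.

(* Main.v *)
Require Import Defs.
From mathcomp Require Import all_boot perm fingroup.
From Stdlib Require Import FunctionalExtensionality PropExtensionality ProofIrrelevance Classical Relation_Operators.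
Require Import Defs.
Set Implicit Arguments. Unset Strict Implicit. Unset Printing Implicit Defensive.

Definition gflip (A : eqType) (a : A * bool) : A * bool := (a.1, ~~ a.2).
Definition gred (A : eqType) (w : seq (A * bool)) : bool :=
  sorted (fun a b => b != gflip a) w.
Definition gpush (A : eqType) (a : A * bool) (s : seq (A * bool)) :=
  if s is b :: s' then (if b == gflip a then s' else a :: s) else [:: a].
Definition greduce (A : eqType) (w : seq (A * bool)) := foldr (@gpush A) [::] w.

Lemma gflipK (A : eqType) : involutive (@gflip A).
Proof. by case=> a b; rewrite /gflip /= negbK. Qed.

Lemma gred_cons (A : eqType) (a : A * bool) s :
  gred (a :: s) = (if s is b :: _ then b != gflip a else true) && gred s.
Proof. by case: s. Qed.

Lemma gred_tail (A : eqType) (a : A * bool) s : gred (a :: s) -> gred s.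
Proof. by rewrite gred_cons => /andP []. Qed.

Lemma gred_push (A : eqType) (a : A * bool) s : gred s -> gred (gpush a s).
Proof.
case: s => [|b s] //= Hs; case: ifP => Hb.
  by case: s Hs => //= c s /andP [].
by rewrite gred_cons Hb.
Qed.

Lemma gred_foldr (A : eqType) (s r : seq (A * bool)) : gred s -> gred (foldr (@gpush A) s r).
Proof. by move=> Hs; elim: r => //= a r IH; apply: gred_push. Qed.

Lemma gred_reduce (A : eqType) (w : seq (A * bool)) : gred (greduce w).
Proof. exact: gred_foldr. Qed.

Lemma greduce_id (A : eqType) (w : seq (A * bool)) : gred w -> greduce w = w.
Proof.
elim: w => // a w IH Hw.
change (gpush a (greduce w) = a :: w); rewrite IH ?(gred_tail Hw) //.
move: Hw; rewrite gred_cons; case: w {IH} => //= b w /andP [Hb _].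
by rewrite (negbTE Hb).
Qed.

Lemma gpushK (A : eqType) (a : A * bool) s : gred s -> gpush (gflip a) (gpush a s) = s.
Proof.
case: s => [|b s] /=; first by rewrite gflipK eqxx.
case: ifP => [/eqP -> |Hb] Hs.
  case: s Hs => //= c s /andP [Hc _]. by rewrite (negbTE Hc).
by rewrite /= gflipK eqxx.
Qed.

Lemma gpushK' (A : eqType) (a : A * bool) s : gred s -> gpush a (gpush (gflip a) s) = s.
Proof. by move=> Hs; rewrite -{1}(gflipK a) gpushK. Qed.

Lemma gpush_inj (A : eqType) (a : A * bool) s s' : gred s -> gred s' ->
  gpush a s = gpush a s' -> s = s'.
Proof. by move=> Hs Hs' E; rewrite -(gpushK a Hs) E gpushK. Qed.

Lemma gfoldr_push (A : eqType) (a : A * bool) (s r : seq (A * bool)) : gred s ->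
  foldr (@gpush A) s (gpush a r) = gpush a (foldr (@gpush A) s r).
Proof.
move=> Hs; case: r => [|b r] //=; case: ifP => // /eqP ->.
by rewrite gpushK' // gred_foldr.
Qed.

Lemma gfoldr_reduce (A : eqType) (s u : seq (A * bool)) : gred s ->
  foldr (@gpush A) s (greduce u) = foldr (@gpush A) s u.
Proof.
move=> Hs; elim: u => //= a u IH. by rewrite gfoldr_push // IH.
Qed.

Lemma greduce_cat (A : eqType) (u v : seq (A * bool)) :
  greduce (u ++ v) = foldr (@gpush A) (greduce v) u.
Proof. by rewrite /greduce foldr_cat. Qed.

Lemma greduce_catl (A : eqType) (u v : seq (A * bool)) :
  greduce (u ++ v) = greduce (greduce u ++ v).
Proof. by rewrite !greduce_cat gfoldr_reduce // gred_reduce. Qed.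

Lemma greduce_catr (A : eqType) (u v : seq (A * bool)) :
  greduce (u ++ v) = greduce (u ++ greduce v).
Proof. by rewrite !greduce_cat (greduce_id (gred_reduce v)). Qed.

Definition ginv (A : eqType) (w : seq (A * bool)) := rev (map (@gflip A) w).

Lemma ginvK (A : eqType) : involutive (@ginv A).
Proof. by move=> w; rewrite /ginv map_rev revK -map_comp (eq_map (@gflipK A)) map_id. Qed.

Lemma gfoldr_inv (A : eqType) (w s : seq (A * bool)) : gred s ->
  foldr (@gpush A) s (w ++ ginv w) = s.
Proof.
elim: w s => //= a w IH s Hs.
rewrite /ginv map_cons rev_cons -cats1 catA foldr_cat /=.
by rewrite IH ?gpushK' // gred_push.
Qed.

Lemma greduce_inv (A : eqType) (w x : seq (A * bool)) :
  greduce (w ++ ginv w ++ x) = greduce x.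
Proof. by rewrite catA greduce_cat gfoldr_inv // gred_reduce. Qed.

Lemma greduce_inv' (A : eqType) (w x : seq (A * bool)) :
  greduce (ginv w ++ w ++ x) = greduce x.
Proof. by rewrite -{2}(ginvK w) greduce_inv. Qed.

Lemma gall_reduce (A : eqType) (P : pred (A * bool)) (w : seq (A * bool)) :
  all P w -> all P (greduce w).
Proof.
elim: w => //= a w IH /andP [Pa Pw]; move: (IH Pw).
change (all P (greduce w) -> all P (gpush a (greduce w))).
case: (greduce w) => [|b s] /=; first by rewrite Pa.
case: ifP => _ /=; first by case/andP.
by rewrite Pa.
Qed.

Lemma gdecomp (A : eqType) (P Q : pred (A * bool)) (p q : seq (A * bool)) :
  all P p -> all Q q -> exists p1 q1,
    foldr (@gpush A) q p = p1 ++ q1 /\ all P p1 /\ all Q q1.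
Proof.
move=> Hp Hq; elim: p Hp => [|a p IH] /=; first by exists [::], q.
case/andP => Pa /IH [p1 [q1 [E [H1 H2]]]]; rewrite E.
case: p1 E H1 => [|b p1] E H1 /=.
  case: q1 H2 {E} => [|c q1] H2 /=. 
    by exists [:: a], [::]; split => //=; rewrite andbT.
  case: ifP => _; first by exists [::], q1; move: H2 => /= /andP [].
  by exists [:: a], (c :: q1); split => //=; rewrite andbT.
case: ifP => _; first by exists p1, q1; move: H1 => /= /andP [].
by exists (a :: b :: p1), q1; split => //=; rewrite Pa.
Qed.

Lemma fg_eq n (u v : FG n) : sval u = sval v -> u = v.
Proof. case: u => u Hu; case: v => v Hv /= E; subst; f_equal; apply: bool_irrelevance. Qed.

Lemma redE n (w : seq (letter n)) : reduce w = greduce w.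
Proof. by []. Qed.
Lemma reducedE n (w : seq (letter n)) : reduced w = gred w.
Proof. by []. Qed.
Lemma flipE n : @flip n = @gflip _.
Proof. by []. Qed.

Lemma fgred n (u : FG n) : gred (sval u).
Proof. exact: (svalP u). Qed.

Lemma fmulA n (a b c : FG n) : fmul (fmul a b) c = fmul a (fmul b c).
Proof.
apply: fg_eq; rewrite /fmul /= !redE.
by rewrite -greduce_catl -greduce_catr catA.
Qed.

Lemma fmul1g n (a : FG n) : fmul (fone n) a = a.
Proof. by apply: fg_eq; rewrite /= redE greduce_id // fgred. Qed.

Lemma fmulg1 n (a : FG n) : fmul a (fone n) = a.
Proof. by apply: fg_eq; rewrite /= redE cats0 greduce_id // fgred. Qed.

Lemma fmulVg n (a : FG n) : fmul (finv a) a = fone n.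
Proof.
apply: fg_eq; rewrite /fmul /finv /= !redE -greduce_catl.
have := greduce_inv' (sval a) [::]; rewrite cats0 => ->; done.
Qed.

Lemma fmulgV n (a : FG n) : fmul a (finv a) = fone n.
Proof.
apply: fg_eq; rewrite /fmul /finv /= !redE -greduce_catr.
have := greduce_inv (sval a) [::]; rewrite cats0 => ->; done.
Qed.

Lemma fmulKg n (a b : FG n) : fmul (finv a) (fmul a b) = b.
Proof. by rewrite -fmulA fmulVg fmul1g. Qed.
Lemma fmulVKg n (a b : FG n) : fmul a (fmul (finv a) b) = b.
Proof. by rewrite -fmulA fmulgV fmul1g. Qed.
Lemma fmulgK n (a b : FG n) : fmul (fmul b a) (finv a) = b.
Proof. by rewrite fmulA fmulgV fmulg1. Qed.
Lemma fmulgVK n (a b : FG n) : fmul (fmul b (finv a)) a = b.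
Proof. by rewrite fmulA fmulVg fmulg1. Qed.

Lemma finv_uniq n (a b : FG n) : fmul a b = fone n -> finv a = b.
Proof. by move=> E; rewrite -(fmulg1 (finv a)) -E fmulKg. Qed.

Lemma finvK n (a : FG n) : finv (finv a) = a.
Proof. by apply: finv_uniq; rewrite fmulVg. Qed.

Lemma finvM n (a b : FG n) : finv (fmul a b) = fmul (finv b) (finv a).
Proof. by apply: finv_uniq; rewrite fmulA fmulVKg fmulgV. Qed.

Lemma finv1 n : finv (fone n) = fone n.
Proof. by apply: finv_uniq; rewrite fmul1g. Qed.

Lemma fmulI n (a b c : FG n) : fmul a b = fmul a c -> b = c.
Proof. by move=> E; rewrite -(fmulKg a b) E fmulKg. Qed.
Lemma fmulIr n (a b c : FG n) : fmul b a = fmul c a -> b = c.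
Proof. by move=> E; rewrite -(fmulgK a b) E fmulgK. Qed.

Lemma gen_sub n (A B : FG n -> Prop) : (forall x, A x -> gen B x) -> forall x, gen A x -> gen B x.
Proof. move=> H x; elim=> {x} [x /H //|||]; by constructor. Qed.

Lemma gen_mulV n (A : FG n -> Prop) a b : gen A a -> gen A b -> gen A (fmul a (finv b)).
Proof. by move=> Ha Hb; apply: gen_mul => //; apply: gen_inv. Qed.

Lemma gen_invE n (A : FG n -> Prop) a : gen A (finv a) -> gen A a.
Proof. by move=> H; rewrite -(finvK a); apply: gen_inv. Qed.

Lemma rcoset_mul n (A : FG n -> Prop) h g : gen A h -> rcoset (gen A) (fmul h g) = rcoset (gen A) g.
Proof.
move=> Hh; apply: functional_extensionality => x; apply: propositional_extensionality.
split=> [[k [Hk ->]]|[k [Hk ->]]].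
  by exists (fmul k h); split; [apply: gen_mul|rewrite fmulA].
exists (fmul k (finv h)); split; first by apply: gen_mulV.
by rewrite fmulA fmulKg.
Qed.

Lemma rcoset_self n (A : FG n -> Prop) g : rcoset (gen A) g g.
Proof. by exists (fone n); split; [apply: gen_one|rewrite fmul1g]. Qed.

Lemma rcoset_eqP n (A : FG n -> Prop) a b :
  rcoset (gen A) a = rcoset (gen A) b -> gen A (fmul a (finv b)).
Proof.
move=> E; have := rcoset_self A a; rewrite E => -[k [Hk ->]].
by rewrite fmulgK.
Qed.

Lemma rcoset_mem n (A : FG n -> Prop) g x : rcoset (gen A) g x -> rcoset (gen A) g = rcoset (gen A) x.
Proof.
move=> [k [Hk ->]]; by rewrite rcoset_mul.
Qed.

Definition tc n (a : sidx n * bool) : letter n := ((sval a.1).1.2, (sval a.1).2).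
Definition tm n (a : sidx n * bool) : letter n := ((sval a.1).1.1, a.2).
Definition trip n (a : sidx n * bool) : seq (letter n) := [:: tc a; tm a; gflip (tc a)].
Definition evw n (w : seq (sidx n * bool)) : seq (letter n) := flatten (map (@trip n) w).
Definition evl n (w : seq (sidx n * bool)) : FG n := exist _ (reduce (evw w)) (reduce_reduced _).

Lemma evl_eq n (u v : seq (sidx n * bool)) : greduce (evw u) = greduce (evw v) -> evl u = evl v.
Proof. by move=> E; apply: fg_eq. Qed.

Lemma evw_cat n (u v : seq (sidx n * bool)) : evw (u ++ v) = evw u ++ evw v.
Proof. by rewrite /evw map_cat flatten_cat. Qed.

Lemma evl_cat n (u v : seq (sidx n * bool)) : evl (u ++ v) = fmul (evl u) (evl v).
Proof.
apply: fg_eq; rewrite /= !redE evw_cat.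
by rewrite greduce_catl greduce_catr.
Qed.

Lemma trip_flip n (a : sidx n * bool) : trip (gflip a) = ginv (trip a).
Proof. by case: a => s e; rewrite /trip /ginv /tc /tm /= gflipK. Qed.

Lemma evw_push n (a : sidx n * bool) r :
  greduce (evw (gpush a r)) = greduce (trip a ++ evw r).
Proof.
case: r => [|b r] //; rewrite /gpush; case: ifP => // /eqP ->.
change (evw (gflip a :: r)) with (trip (gflip a) ++ evw r).
by rewrite trip_flip greduce_inv.
Qed.

Lemma evl_reduce n (w : seq (sidx n * bool)) : evl (greduce w) = evl w.
Proof.
apply: evl_eq; elim: w => //= a w IH.
change (greduce (evw (gpush a (greduce w))) = greduce (trip a ++ evw w)).
by rewrite evw_push greduce_catr IH -greduce_catr.
Qed.

Lemma evl_inv n (u : seq (sidx n * bool)) : finv (evl u) = evl (ginv u).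
Proof.
apply: finv_uniq; rewrite -evl_cat -evl_reduce.
have := greduce_inv u [::]; rewrite cats0 => ->; by apply: fg_eq.
Qed.

Lemma pair_neq1 (A B : eqType) (x y : A * B) : x.1 != y.1 -> (x == y) = false.
Proof. by case: x y => a b [c d] /= H; rewrite xpair_eqE (negbTE H). Qed.

Lemma gpush_ne (A : eqType) (a b : A * bool) s : b != gflip a -> gpush a (b :: s) = [:: a, b & s].
Proof. by move=> H /=; rewrite (negbTE H). Qed.

Lemma evw_cons n (a : sidx n * bool) w :
  greduce (evw (a :: w)) = gpush (tc a) (gpush (tm a) (gpush (gflip (tc a)) (greduce (evw w)))).
Proof. by []. Qed.

Lemma evl_head n (w : seq (sidx n * bool)) a : gred (a :: w) ->
  exists R, greduce (evw (a :: w)) = [:: tc a, tm a & R].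
Proof.
elim: w a => [|a2 w IH] a Hred.
  rewrite evw_cons /=.
  case: a {Hred} => [[[[i j] b] hij] e]; rewrite /tc /tm /=.
  rewrite pair_neq1 /=; last by rewrite eq_sym.
  rewrite pair_neq1 //=. by exists [:: (j, ~~ b)].
have [R HR] := IH a2 (gred_tail Hred).
rewrite evw_cons HR.
move: Hred; rewrite gred_cons => /andP [Hne _].
case: a Hne HR => [[[[i j] b] hij] e]; case: a2 => [[[[i2 j2] b2] hij2] e2] Hne HR.
rewrite /tc /tm /= gflipK.
case: ifP => [/eqP [Ej Eb]|/negbT Hcb].
  subst j2 b2.
  case: ((i2, e2) =P (i, ~~ e)) => [[Ei Ee]|Hm].
    subst i2 e2; case/negP: Hne; rewrite /gflip /=.
    apply/eqP; congr (_, _); exact: val_inj.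
  rewrite gpush_ne; last by apply/eqP.
  rewrite gpush_ne; last by rewrite pair_neq1.
  by exists [:: (i2, e2) & R].
rewrite gpush_ne; last by rewrite pair_neq1 //= eq_sym.
rewrite gpush_ne; last by rewrite pair_neq1.
by exists [:: gflip (j, b), (j2, b2), (i2, e2) & R].
Qed.

Lemma gred_evw n (w : seq (sidx n * bool)) : gred (greduce (evw w)).
Proof. exact: gred_reduce. Qed.

Lemma evl_inj n (u v : seq (sidx n * bool)) : gred u -> gred v -> evl u = evl v -> u = v.
Proof.
move=> Hu Hv E; have {E}: greduce (evw u) = greduce (evw v) by move: E => /(congr1 sval).
elim: u v Hu Hv => [|a u IH] [|b v] Hu Hv //.
- have [R ->] := evl_head Hv. by [].
- have [R ->] := evl_head Hu. by [].
move=> E.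
have Eab : a = b.
  have [R1 E1] := evl_head Hu; have [R2 E2] := evl_head Hv.
  move: E; rewrite E1 E2 => -[].
  case: a {Hu E1} => [[[[i j] c] hij] e]; case: b {Hv E2} => [[[[i2 j2] c2] hij2] e2].
  rewrite /tc /tm /= => Ej Ec Ei Ee _.
  congr (_, _) => //; apply: val_inj; by rewrite /= Ej Ec Ei.
subst b; congr (_ :: _); apply: IH; [exact: gred_tail Hu|exact: gred_tail Hv|].
move: E; rewrite !evw_cons => E.
have G1 := gred_evw u; have G2 := gred_evw v.
move/(gpush_inj (gred_push _ (gred_push _ G1)) (gred_push _ (gred_push _ G2))): E.
move/(gpush_inj (gred_push _ G1) (gred_push _ G2)).
exact: (gpush_inj G1 G2).
Qed.

Lemma selt_evl n (s : sidx n) : selt s = evl [:: (s, false)].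
Proof.
apply: fg_eq; case: s => [[[i j] b] hij].
have hji : j != i by rewrite eq_sym.
transitivity [:: (j, b); (i, false); (j, ~~ b)].
  case: b hij => hij; rewrite /selt /fmul /finv /gx /=.
  all: do 4 (unfold push, flip, gflip, tc, tm; simpl; rewrite ?pair_neq1 //=).
Qed.

Lemma evl_nil n : evl [::] = fone n.
Proof. by apply: fg_eq. Qed.

Lemma evl_true n (s : sidx n) : evl [:: (s, true)] = finv (selt s).
Proof. by rewrite selt_evl evl_inv. Qed.

Lemma gen_to_evl n (P : pred (sidx n * bool)) (A : FG n -> Prop) :
  (forall a, P a -> P (gflip a)) ->
  (forall x, A x -> exists s, x = selt s /\ P (s, false)) ->
  forall x, gen A x -> exists w, gred w /\ all P w /\ x = evl w.
Proof.
move=> HP HA x; elim => {x}.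
- move=> x /HA [s [-> Ps]]; exists [:: (s, false)]; split => //; split; last exact: selt_evl.
  by rewrite /= Ps.
- by exists [::]; rewrite evl_nil.
- move=> x y _ [u [Ru [Pu ->]]] _ [v [Rv [Pv ->]]].
  exists (greduce (u ++ v)); split; first exact: gred_reduce.
  split; first by apply: gall_reduce; rewrite all_cat Pu.
  by rewrite evl_reduce evl_cat.
- move=> x _ [u [Ru [Pu ->]]].
  exists (greduce (ginv u)); split; first exact: gred_reduce.
  split; last by rewrite evl_reduce evl_inv.
  apply: gall_reduce; rewrite /ginv all_rev all_map.
  by apply: sub_all Pu => a /HP.
Qed.

Lemma evl_to_gen n (P : pred (sidx n * bool)) (A : FG n -> Prop) :
  (forall a, P a -> A (selt a.1)) -> forall w, all P w -> gen A (evl w).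
Proof.
move=> HA; elim => [|a w IH] Hw; first by rewrite evl_nil; apply: gen_one.
move: Hw => /= /andP [Pa Pw]; rewrite -cat1s evl_cat; apply: gen_mul; last exact: IH.
case: a Pa => s [] /HA /= Hs; last by rewrite -selt_evl; apply: gen_in.
by rewrite evl_true; apply: gen_inv; apply: gen_in.
Qed.

Lemma selt_inj n : injective (@selt n).
Proof.
move=> s t; rewrite !selt_evl => /evl_inj E.
by case: (E isT isT).
Qed.

Definition avoid n (s : sidx n) : pred (sidx n * bool) := fun a => a.1 != s.

Lemma G_evl n x : Ggrp x -> exists w, gred w /\ x = @evl n w.
Proof.
move=> Hx; have [|w [R [_ E]]] := @gen_to_evl n predT _ (fun _ _ => isT) _ x Hx.
  by move=> y [s ->]; exists s.
by exists w.
Qed.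

Lemma Gs_evl n s x : Gsub s x -> exists w, gred w /\ all (@avoid n s) w /\ x = evl w.
Proof.
apply: gen_to_evl => // y [[t ->] Hne]; exists t; split => //.
by rewrite /avoid /=; apply/eqP => E; apply: Hne; rewrite E.
Qed.

Lemma evl_G n w : Ggrp (@evl n w).
Proof.
apply: (@evl_to_gen n predT); last by rewrite all_predT.
by move=> a _; exists a.1.
Qed.

Lemma evl_Gs n s w : all (@avoid n s) w -> Gsub s (evl w).
Proof.
apply: evl_to_gen => a Ha; split; first by exists a.1.
by move/selt_inj => E; move: Ha; rewrite /avoid E eqxx.
Qed.

Lemma Gs_G n s x : @Gsub n s x -> Ggrp x.
Proof. apply: gen_sub => y [Hy _]; exact: gen_in. Qed.

Lemma selt_Gs n (s t : sidx n) : s != t -> Gsub t (selt s).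
Proof.
move=> H; apply: gen_in; split; first by exists s.
by move/selt_inj => E; move: H; rewrite E eqxx.
Qed.

Lemma all_take_find (T : Type) (p : pred T) (w : seq T) :
  all (fun x => ~~ p x) (take (find p w) w).
Proof. by elim: w => //= a w IH; case: ifP => //= ->. Qed.

Lemma all_drop (T : Type) (p : pred T) k (w : seq T) : all p w -> all p (drop k w).
Proof. by rewrite -{1}(cat_take_drop k w) all_cat => /andP []. Qed.

Lemma KL n (i : sidx n) (P : sidx n -> Prop) b : Ggrp b ->
  (forall s, P s -> exists p q, Gsub i p /\ Gsub s q /\ b = fmul p q) ->
  exists u, Gsub i u /\ forall s, P s -> Gsub s (fmul u b).
Proof.
move=> /G_evl [w [Rw ->]] H.
pose k := find (fun a : sidx n * bool => a.1 == i) w.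
exists (finv (evl (take k w))); split.
  apply: gen_inv; apply: evl_Gs; exact: all_take_find.
move=> s /H [p [q [/Gs_evl [wp [_ [Ap ->]]] [/Gs_evl [wq [_ [Aq ->]]] E]]]].
rewrite -{2}(cat_take_drop k w) evl_cat fmulKg.
apply: evl_Gs.
move: E; rewrite -evl_cat -[evl (wp ++ wq)]evl_reduce greduce_cat.
have [p1 [q1 [D [A1 A2]]]] := gdecomp Ap (gall_reduce Aq).
rewrite D => /evl_inj E.
have Ew : w = p1 ++ q1.
  by apply: E => //; rewrite -D; apply: gred_foldr; apply: gred_reduce.
rewrite /k Ew find_cat.
have -> : has (fun a : sidx n * bool => a.1 == i) p1 = false.
  by apply/negbTE; rewrite -all_predC; apply: sub_all A1.
rewrite drop_cat ltnNge leq_addr /= addKn.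
exact: all_drop.
Qed.

Definition CE n := @coset_elt n (sidx n) (@Ggrp n) (@Gsub n).

Lemma ce_eq n (x y : CE n) : ctyp x = ctyp y -> ccos x = ccos y -> x = y.
Proof.
case: x => [[t C] Hx]; case: y => [[t' C'] Hy] /=; rewrite /ctyp /ccos /= => E1 E2.
subst t' C'; f_equal; apply: proof_irrelevance.
Qed.

Definition mkE n (t : sidx n) g (Hg : Ggrp g) : CE n :=
  exist _ (t, rcoset (Gsub t) g) (ex_intro _ g (conj Hg erefl)).

Lemma mkE_typ n t g Hg : ctyp (@mkE n t g Hg) = t. Proof. by []. Qed.
Lemma mkE_cos n t g Hg : ccos (@mkE n t g Hg) = rcoset (Gsub t) g. Proof. by []. Qed.

Lemma ce_repr n (x : CE n) : exists g, Ggrp g /\ ccos x = rcoset (Gsub (ctyp x)) g.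
Proof. by case: x => [[t C] [g [Hg E]]]; exists g. Qed.

Lemma cinc_sym n (x y : CE n) : cinc x y -> cinc y x.
Proof. by case=> H [z [H1 H2]]; split; [move=> E; apply: H|exists z]. Qed.

Lemma fmulP n (p q a g : FG n) : fmul p a = fmul q g -> fmul a (finv g) = fmul (finv p) q.
Proof.
move=> E; apply: (@fmulI _ p); rewrite fmulVKg -fmulA E.
by rewrite fmulgK.
Qed.

Lemma flag_base n (F : CE n -> Prop) : is_flag (@cinc n _ _ _) F ->
  exists g, Ggrp g /\ forall x, F x -> ccos x = rcoset (Gsub (ctyp x)) g.
Proof.
move=> HF.
suff Hl : forall l : seq (sidx n), exists g, Ggrp g /\
  forall x, F x -> ctyp x \in l -> ccos x = rcoset (Gsub (ctyp x)) g.
  have [g [Hg H]] := Hl (enum {: sidx n}).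
  by exists g; split => // x Fx; apply: H; rewrite ?mem_enum.
elim=> [|i l [g [Hg IH]]]; first by exists (fone n); split => //; apply: gen_one.
case: (classic (exists xi, F xi /\ ctyp xi = i)) => [[xi [Fxi Ti]]|Hno]; last first.
  exists g; split => // x Fx; rewrite in_cons => /orP [/eqP Ti|]; last exact: IH.
  by case: Hno; exists x.
have [a [Ha Ea]] := ce_repr xi; rewrite Ti in Ea.
pose P s := exists y, F y /\ ctyp y = s /\ s \in l /\ s <> i.
have Hb : Ggrp (fmul a (finv g)) by apply: gen_mul => //; apply: gen_inv.
have HP : forall s, P s -> exists p q, Gsub i p /\ Gsub s q /\ fmul a (finv g) = fmul p q.
  move=> s [y [Fy [Ty [Hsl Hsi]]]].
  have Hyx : y <> xi by move=> E; apply: Hsi; rewrite -Ty E.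
  have [_ [z [Hz1 Hz2]]] := HF _ _ Fxi Fy (nesym Hyx).
  have Ey : ccos y = rcoset (Gsub s) g by rewrite IH ?Ty.
  move: Hz1 Hz2; rewrite Ea Ey.
  case=> [p [Hp ->]] [q [Hq E]].
  exists (finv p), q; split; first exact: gen_inv.
  split => //; exact: fmulP E.
have [u [Hu Hus]] := @KL n i P _ Hb HP.
exists (fmul u a); split; first by apply: gen_mul => //; apply: (Gs_G Hu).
move=> x Fx Hin; case: (ctyp x =P i) => [Tx|Hxi].
  have Exi : x = xi.
    apply: NNPP => Hne; have [Ht _] := HF _ _ Fx Fxi Hne; by apply: Ht; rewrite Tx Ti.
  by subst x; rewrite Ea Ti rcoset_mul.
have Hxl : ctyp x \in l by move: Hin; rewrite in_cons => /orP [/eqP//|].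
have Pt : P (ctyp x) by exists x.
rewrite IH // -(@rcoset_mul _ _ (fmul u (fmul a (finv g)))); last exact: Hus.
by rewrite fmulA fmulgVK.
Qed.

Lemma geometry n : is_geometry (@ctyp n (sidx n) (@Ggrp n) (@Gsub n)) (@cinc n (sidx n) (@Ggrp n) (@Gsub n)).
Proof.
move=> F HF; have [g [Hg Hb]] := flag_base HF.
exists (fun x : CE n => ccos x = rcoset (Gsub (ctyp x)) g); split; last exact: Hb.
split.
  move=> x y Hx Hy Hxy; split.
    by move=> E; apply: Hxy; apply: ce_eq => //; rewrite Hx Hy E.
  by exists g; rewrite Hx Hy; split; apply: rcoset_self.
by move=> i; exists (mkE i Hg).
Qed.

Lemma rshift_rcoset n (H : FG n -> Prop) a h : rshift (rcoset H a) h = rcoset H (fmul a h).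
Proof.
apply: functional_extensionality => x; apply: propositional_extensionality; split.
  by case=> c [[k [Hk ->]] ->]; exists k; rewrite fmulA.
by case=> k [Hk ->]; exists (fmul k a); split; [exists k|rewrite fmulA].
Qed.

Lemma flag_trans n : flag_transitive (@Ggrp n) (@Gsub n).
Proof.
move=> F1 F2 H1 H2 _.
have [g1 [Hg1 E1]] := flag_base H1; have [g2 [Hg2 E2]] := flag_base H2.
exists (fmul (finv g1) g2); split; first by apply: gen_mul => //; apply: gen_inv.
move=> x y Fx Fy Txy.
by rewrite (E1 x Fx) (E2 y Fy) Txy rshift_rcoset fmulVKg.
Qed.

Lemma crt_sym (X : Type) (R : X -> X -> Prop) : (forall a b, R a b -> R b a) ->
  forall a b, clos_refl_trans X R a b -> clos_refl_trans X R b a.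
Proof.
move=> HR a b; elim=> {a b} [a b /HR H|a|a b c _ H1 _ H2].
- exact: rt_step.
- exact: rt_refl.
- exact: rt_trans H2 H1.
Qed.

Lemma resconn n : residually_connected (@ctyp n (sidx n) (@Ggrp n) (@Gsub n)) (@cinc n (sidx n) (@Ggrp n) (@Gsub n)).
Proof.
move=> F HF [i [j [Hij [Hi Hj]]]] x y Rx Ry.
have [g [Hg Hb]] := flag_base HF.
pose Res := residue (@cinc n (sidx n) (@Ggrp n) (@Gsub n)) F.
pose rel := fun a b => Res a /\ Res b /\ cinc a b.
pose NT t := ~ ftypes (@ctyp n (sidx n) (@Ggrp n) (@Gsub n)) F t.
have ResE : forall (t : sidx n) h (z : CE n), NT t -> (forall y, F y -> Gsub (ctyp y) h) ->
    ctyp z = t -> ccos z = rcoset (Gsub t) (fmul h g) -> Res z.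
  move=> t h z NTt HJ Tz Ez; split.
    by move=> Fz; apply: NTt; exists z.
  move=> y0 Fy; split.
    by move=> E; apply: NTt; exists y0; rewrite -E.
  exists (fmul h g); split; first by rewrite Ez; apply: rcoset_self.
  by rewrite (Hb y0 Fy); exists h; split => //; apply: HJ.
have JJ : forall w, (forall a, a \in w -> NT a.1) -> forall y0, F y0 -> Gsub (ctyp y0) (@evl n w).
  move=> w Hw y0 Fy; apply: evl_Gs; apply/allP => a Ha; rewrite /avoid.
  by apply/eqP => E; apply: (Hw a Ha); exists y0; split => //; rewrite E.
have same : forall w, (forall a, a \in w -> NT a.1) -> forall z1 z2 : CE n,
    NT (ctyp z1) -> NT (ctyp z2) ->
    ccos z1 = rcoset (Gsub (ctyp z1)) (fmul (evl w) g) ->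
    ccos z2 = rcoset (Gsub (ctyp z2)) (fmul (evl w) g) ->
    clos_refl_trans _ rel z1 z2.
  move=> w Hw z1 z2 N1 N2 E1 E2.
  case: (ctyp z1 =P ctyp z2) => [Et|Hne].
    have -> : z1 = z2 by apply: ce_eq => //; rewrite E1 E2 Et.
    exact: rt_refl.
  apply: rt_step; split; first exact: (ResE _ _ _ N1 (JJ w Hw) erefl E1).
  split; first exact: (ResE _ _ _ N2 (JJ w Hw) erefl E2).
  split => //; exists (fmul (evl w) g); rewrite E1 E2; split; exact: rcoset_self.
pose B := mkE i Hg.
have NB : NT (ctyp B) by [].
have EB : ccos B = rcoset (Gsub (ctyp B)) (fmul (@evl n [::]) g) by rewrite evl_nil fmul1g.
have key : forall w, (forall a, a \in w -> NT a.1) -> forall z : CE n, NT (ctyp z) ->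
    ccos z = rcoset (Gsub (ctyp z)) (fmul (evl w) g) -> clos_refl_trans _ rel z B.
  elim=> [|a w IH] Hw z Nz Ez.
    exact: (same [::] Hw).
  have [t' [Nt' Ht']] : exists t', NT t' /\ a.1 != t'.
    case: (i =P a.1) => [Ei|Hne]; last by exists i; split => //; apply/eqP => E; apply: Hne.
    exists j; split => //; apply/eqP => E; apply: Hij; by rewrite Ei E.
  have Hw' : forall b, b \in w -> NT b.1 by move=> b Hb'; apply: Hw; rewrite in_cons Hb' orbT.
  have Hgy : Ggrp (fmul (evl (a :: w)) g) by apply: gen_mul => //; apply: evl_G.
  pose y0 := mkE t' Hgy.
  apply: (@rt_trans _ _ _ y0); first exact: (same (a :: w)).
  apply: IH => //; rewrite mkE_cos mkE_typ.
  rewrite -cat1s evl_cat fmulA rcoset_mul //.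
  by apply: evl_Gs; rewrite /= /avoid Ht'.
suff conn : forall z, Res z -> clos_refl_trans _ rel z B.
  apply: rt_trans (conn x Rx) _; apply: crt_sym (conn y Ry).
  by move=> a b [Ha [Hb' Hab]]; split => //; split => //; apply: cinc_sym.
move=> z Rz.
pose F' := fun u : CE n => F u \/ u = z.
have HF' : is_flag (@cinc n (sidx n) (@Ggrp n) (@Gsub n)) F'.
  move=> a b [Fa|->] [Fb|->] Hab.
  - exact: HF.
  - exact: cinc_sym (Rz.2 a Fa).
  - exact: Rz.2 b Fb.
  - by case: Hab.
have [g' [Hg' Hb']] := flag_base HF'.
have Hk : Ggrp (fmul g' (finv g)) by apply: gen_mul => //; apply: gen_inv.
have [w [Rw Ew]] := G_evl Hk.
have Hw : forall a, a \in w -> NT a.1.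
  move=> a Ha [y0 [Fy Ty]].
  have : Gsub (ctyp y0) (fmul g' (finv g)).
    apply: rcoset_eqP; rewrite -(Hb y0 Fy) -(Hb' y0) //; by left.
  case/Gs_evl => w' [Rw' [Aw' Ew']].
  have Eww : w = w' by apply: evl_inj => //; rewrite -Ew -Ew'.
  by move: Aw' => /allP /(_ a); rewrite -Eww Ha /avoid Ty eqxx => /(_ isT).
apply: (key w Hw).
  move=> [y0 [Fy Ty]]; have [Hne _] := Rz.2 y0 Fy; by apply: Hne.
by rewrite -Ew fmulgVK; apply: Hb'; right.
Qed.

Definition fhom n (phi : FG n -> FG n) := forall u v, phi (fmul u v) = fmul (phi u) (phi v).

Lemma fhom1 n phi : @fhom n phi -> phi (fone n) = fone n.
Proof.
move=> H; apply: (@fmulI _ (phi (fone n))); rewrite -H !fmulg1 //.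
Qed.

Lemma fhomV n phi : @fhom n phi -> forall u, phi (finv u) = finv (phi u).
Proof.
move=> H u; apply/esym/finv_uniq; by rewrite -H fmulgV fhom1.
Qed.

Definition img n (f : 'I_n -> FG n) (a : letter n) := if a.2 then finv (f a.1) else f a.1.
Definition extl n (f : 'I_n -> FG n) (l : seq (letter n)) :=
  foldr (fun a acc => fmul (img f a) acc) (fone n) l.

Lemma extE n f w : @ext n f w = extl f (sval w). Proof. by []. Qed.

Lemma extl_cat n f (u v : seq (letter n)) : extl f (u ++ v) = fmul (extl f u) (extl f v).
Proof. elim: u => [|a u IH] /=; first by rewrite fmul1g. by rewrite IH fmulA. Qed.

Lemma extl_push n f (a : letter n) s : extl f (gpush a s) = extl f (a :: s).
Proof.
case: s => [|b s] //=; case: ifP => // /eqP ->.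
rewrite -fmulA; suff -> : fmul (img f a) (img f (gflip a)) = fone n by rewrite fmul1g.
by case: a => k [] /=; rewrite /img /= ?finvK ?fmulVg ?fmulgV.
Qed.

Lemma extl_reduce n f (l : seq (letter n)) : extl f (greduce l) = extl f l.
Proof.
elim: l => //= a l IH.
by rewrite -[gpush a _]/(gpush a (greduce l)) extl_push /= IH.
Qed.

Lemma ext_hom n f : fhom (@ext n f).
Proof. by move=> u v; rewrite !extE /= redE extl_reduce extl_cat. Qed.

Lemma ext_gx n f (k : 'I_n) : ext f (gx k) = f k.
Proof. by rewrite extE /= /img /= fmulg1. Qed.

Definition lg n (a : letter n) : FG n := exist _ [:: a] isT.

Lemma extl_gx n (w : FG n) : extl (@gx n) (sval w) = w.
Proof.
suff H : forall l : seq (letter n), extl (@gx n) l = exist _ (reduce l) (reduce_reduced l).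
  by apply: fg_eq; rewrite H /= redE greduce_id // fgred.
elim=> [|a l IH]; first by apply: fg_eq.
rewrite /= IH; apply: fg_eq; rewrite /=.
by case: a => k []; rewrite /img redE greduce_cat /= (greduce_id (gred_reduce l)).
Qed.

Lemma fhom_extl n phi f l : @fhom n phi -> phi (extl f l) = extl (phi \o f) l.
Proof.
move=> H; elim: l => [|a l IH] /=; first exact: fhom1.
rewrite H IH; congr fmul; rewrite /img /=; case: a.2 => //; exact: fhomV.
Qed.

Lemma fhom_eq n phi psi : @fhom n phi -> @fhom n psi -> (forall k, phi (gx k) = psi (gx k)) ->
  phi =1 psi.
Proof.
move=> H1 H2 E w; rewrite -(extl_gx w) !fhom_extl //.
have EE : phi \o (@gx n) = psi \o (@gx n) by apply: functional_extensionality => k; exact: E.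
by rewrite EE.
Qed.

Lemma fhom_id n phi : @fhom n phi -> (forall k, phi (gx k) = gx k) -> phi =1 id.
Proof. move=> H E; apply: (@fhom_eq n phi id H) => // u v. Qed.

Lemma fhom_selt n phi (s : sidx n) : fhom phi ->
  phi (selt s) = let: (i, j, b) := sval s in
    if b then fmul (finv (phi (gx j))) (fmul (phi (gx i)) (phi (gx j)))
    else fmul (phi (gx j)) (fmul (phi (gx i)) (finv (phi (gx j)))).
Proof.
move=> H; case: s => [[[i j] b] h] /=; rewrite /selt /=.
by case: b h => h; rewrite !H !(fhomV H).
Qed.

Definition Kinv n (phi : FG n -> FG n) :=
  fhom phi /\ (exists psi, cancel phi psi /\ cancel psi phi) /\
  exists pi : {perm sidx n}, forall s, phi (selt s) = selt (pi s) \/ phi (selt s) = finv (selt (pi s)).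

Lemma smap_proof n (sg : 'I_n -> 'I_n) (Hs : injective sg) (s : sidx n) :
  (sg (sval s).1.1, sg (sval s).1.2, (sval s).2).1.1 != (sg (sval s).1.1, sg (sval s).1.2, (sval s).2).1.2.
Proof. by rewrite /= (inj_eq Hs) (svalP s). Qed.
Definition smap n (sg : 'I_n -> 'I_n) (Hs : injective sg) (s : sidx n) : sidx n :=
  exist (fun p : 'I_n * 'I_n * bool => p.1.1 != p.1.2)
    (sg (sval s).1.1, sg (sval s).1.2, (sval s).2)
    (smap_proof Hs s).

Lemma smap_inj n sg (Hs : injective sg) : injective (@smap n sg Hs).
Proof.
move=> [[[i j] b] h] [[[i' j'] b'] h'] /(congr1 sval) [/Hs Ei /Hs Ej Eb].
subst; congr exist; apply: bool_irrelevance.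
Qed.

Lemma relabel n phi sg (Hs : injective sg) : fhom phi ->
  (forall k, phi (gx k) = gx (sg k)) -> forall s, phi (selt s) = selt (@smap n sg Hs s).
Proof.
move=> H E [[[i j] b] h]; rewrite fhom_selt //= !E; by case: b h => h.
Qed.

Lemma Kinv_relabel n phi psi sg (Hs : injective sg) : fhom phi -> fhom psi ->
  (forall k, phi (gx k) = gx (sg k)) ->
  (forall k, phi (psi (gx k)) = gx k) -> (forall k, psi (phi (gx k)) = gx k) -> @Kinv n phi.
Proof.
move=> H1 H2 E E1 E2; split => //; split.
  exists psi; split => u.
    by apply: (@fhom_id n (psi \o phi)) => // a b /=; rewrite H1 H2.
  by apply: (@fhom_id n (phi \o psi)) => // a b /=; rewrite H2 H1.
exists (perm (@smap_inj n sg Hs)) => s; left; rewrite permE; exact: relabel.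
Qed.

Lemma xgenE n (i : 'I_n) : xgen n (val i) = gx i.
Proof. by rewrite /xgen valK. Qed.

Lemma Kinv_rho n : Kinv (@phirho n).
Proof.
have E : forall k : 'I_n, phirho (gx k) = gx (ordS k).
  by move=> k; rewrite /phirho ext_gx -[_ %% n]/(val (ordS k)) xgenE.
have [psi [Hpsi Ep]] : exists psi, fhom psi /\ forall k : 'I_n, psi (gx k) = gx (ord_pred k).
  by exists (@ext n (fun k => gx (ord_pred k))); split; [apply: ext_hom|move=> k; rewrite ext_gx].
have Hr : fhom (@phirho n) := @ext_hom _ _.
apply: (Kinv_relabel (@ordS_inj n) Hr Hpsi E).
  by move=> k; rewrite Ep E ord_predK.
by move=> k; rewrite E Ep ordSK.
Qed.

Definition tauN (m : nat) := if m == 0 then 1 else if m == 1 then 0 else m.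
Lemma tauNK : involutive tauN.
Proof. by case=> [|[|m]]. Qed.

Lemma tau_lt n (hn : 1 < n) (k : 'I_n) : tauN k < n.
Proof. rewrite /tauN; case: ifP => _ //; case: ifP => _ //; exact: ltnW. Qed.

Definition tauo n (hn : 1 < n) (k : 'I_n) : 'I_n := Ordinal (tau_lt hn k).

Lemma tauoK n hn : involutive (@tauo n hn).
Proof. by move=> k; apply: val_inj; rewrite /= tauNK. Qed.

Lemma Kinv_tau n (hn : 1 < n) : Kinv (@phitau n).
Proof.
have E : forall k : 'I_n, phitau (gx k) = gx (tauo hn k).
  by move=> k; rewrite /phitau ext_gx -[if _ then _ else _]/(val (tauo hn k)) xgenE.
have Hr : fhom (@phitau n) := @ext_hom _ _.
apply: (Kinv_relabel (inv_inj (tauoK hn)) Hr Hr E).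
  by move=> k; rewrite !E tauoK.
by move=> k; rewrite !E tauoK.
Qed.

Lemma Kinv_1 n : Kinv (@phi1 n).
Proof.
have E : forall k : 'I_n, phi1 (gx k) = if val k == 0 then finv (gx k) else gx k.
  by move=> k; rewrite /phi1 ext_gx.
have H : fhom (@phi1 n) := @ext_hom _ _.
have Hc : fhom (@phi1 n \o @phi1 n) by move=> a b /=; rewrite !H.
have Hk : forall k, (@phi1 n \o @phi1 n) (gx k) = gx k.
  move=> k /=; rewrite E; case: ifP => Hk; last by rewrite E Hk.
  by rewrite (fhomV H) E Hk finvK.
have II : forall u, phi1 (phi1 u) = u := fhom_id Hc Hk.
split => //; split; first by exists (@phi1 n).
pose f (s : sidx n) : sidx n := exist (fun p : 'I_n * 'I_n * bool => p.1.1 != p.1.2)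
    ((sval s).1.1, (sval s).1.2, (sval s).2 (+) (val (sval s).1.2 == 0)) (svalP s).
have fK : involutive f.
  move=> [[[i j] b] h]; apply: val_inj => /=; by rewrite -addbA addbb addbF.
exists (perm (inv_inj fK)) => s; rewrite permE.
case: s => [[[i j] b] h]; rewrite fhom_selt //= !E /f /=.
case: (boolP (val j == 0)) => Hj.
  have Hi : (val i == 0) = false.
    apply/negbTE; apply: contraNneq h => Hi; apply/eqP; apply: val_inj; rewrite Hi; exact/esym/eqP.
  rewrite Hi; left; rewrite /selt /=.
  by case: b {h}; rewrite /= finvK.
case: (boolP (val i == 0)) => Hi; last by left; rewrite /= !addbF.
right; rewrite /selt /= !addbF.
case: b {h}; rewrite !finvM ?finvK fmulA //.
Qed.

Lemma Kinv_comp n (f g : FG n -> FG n) : Kinv f -> Kinv g -> Kinv (f \o g).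
Proof.
move=> [Hf [[pf [f1 f2]] [pif Ef]]] [Hg [[pg [g1 g2]] [pig Eg]]].
split; first by move=> u v /=; rewrite Hg Hf.
split; first by exists (pg \o pf); split => u /=; rewrite ?f1 ?g1 ?g2 ?f2.
exists (pig * pif)%g => s /=; rewrite permM.
case: (Eg s) => ->; case: (Ef (pig s)) => E; rewrite ?(fhomV Hf) E ?finvK; by [left|right].
Qed.

Lemma Kinv_inv n (f g : FG n -> FG n) : Kinv f -> cancel f g -> cancel g f -> Kinv g.
Proof.
move=> [Hf [_ [pif Ef]]] fg gf.
have Hg : fhom g.
  by move=> u v; rewrite -{1}(gf u) -{1}(gf v) -Hf fg.
split => //; split; first by exists f.
exists (pif^-1)%g => s.
case: (Ef (pif^-1 s)%g); rewrite permKV => E.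
  by left; rewrite -E fg.
right; have -> : selt s = finv (f (selt (pif^-1 s)%g)) by rewrite E finvK.
by rewrite (fhomV Hg) fg.
Qed.

Lemma Kgrp_Kinv n (hn : 1 < n) phi : @Kgrp n phi -> Kinv phi.
Proof.
elim=> {phi}.
- exact: Kinv_1.
- exact: Kinv_rho.
- exact: Kinv_tau.
- split; first by [].
  split; first by exists id.
  by exists 1%g => s; left; rewrite perm1.
- move=> f g _ Hf _ Hg; exact: Kinv_comp.
- move=> f g _ Hf fg gf; exact: Kinv_inv Hf fg gf.
Qed.

Lemma fimg_gen n phi (A B : FG n -> Prop) : fhom phi ->
  (forall x, A x -> gen B (phi x)) -> (forall y, B y -> gen (fimg phi A) y) ->
  fimg phi (gen A) = gen B.
Proof.
move=> H HA HB; apply: functional_extensionality => y; apply: propositional_extensionality.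
split.
  case=> x [Hx ->]; elim: Hx => {x} [x /HA //| |x z _ Hx _ Hz|x _ Hx].
  - by rewrite fhom1 //; apply: gen_one.
  - by rewrite H; apply: gen_mul.
  - by rewrite fhomV //; apply: gen_inv.
move=> Hy; have {Hy} : gen (fimg phi A) y by apply: gen_sub Hy.
elim=> {y} [y [x [Ax ->]]| |y z _ [x [Hx ->]] _ [x' [Hx' ->]]|y _ [x [Hx ->]]].
- by exists x; split => //; apply: gen_in.
- by exists (fone n); split; [apply: gen_one|rewrite fhom1].
- by exists (fmul x x'); split; [apply: gen_mul|rewrite H].
- by exists (finv x); split; [apply: gen_inv|rewrite fhomV].
Qed.

Lemma Kinv_G n phi (pi : {perm sidx n}) : fhom phi ->
  (forall s, phi (selt s) = selt (pi s) \/ phi (selt s) = finv (selt (pi s))) ->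
  fimg phi (@Ggrp n) = @Ggrp n.
Proof.
move=> H E; apply: fimg_gen => //.
  move=> x [s ->]; case: (E s) => ->; [apply: gen_in|apply: gen_inv; apply: gen_in]; by exists (pi s).
move=> y [u ->]; case: (E (pi^-1 u)%g); rewrite permKV => Eu.
  by apply: gen_in; exists (selt (pi^-1 u)%g); split => //; exists (pi^-1 u)%g.
apply: gen_invE; apply: gen_in; exists (selt (pi^-1 u)%g); split => //; by exists (pi^-1 u)%g.
Qed.

Lemma Kinv_Gs n phi (pi : {perm sidx n}) : fhom phi ->
  (forall s, phi (selt s) = selt (pi s) \/ phi (selt s) = finv (selt (pi s))) ->
  forall s, fimg phi (@Gsub n s) = Gsub (pi s).
Proof.
move=> H E s; apply: fimg_gen => //.
  move=> x [[t ->] Hts].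
  have Hne : pi t != pi s.
    apply/eqP => /perm_inj Et; apply: Hts; by rewrite Et.
  case: (E t) => ->; [|apply: gen_inv]; exact: selt_Gs.
move=> y [[u ->] Hu].
have Hne : (pi^-1 u)%g <> s by move=> Et; apply: Hu; rewrite -Et permKV.
case: (E (pi^-1 u)%g); rewrite permKV => Eu.
  apply: gen_in; exists (selt (pi^-1 u)%g); split => //; split; first by exists (pi^-1 u)%g.
  by move/selt_inj.
apply: gen_invE; apply: gen_in; exists (selt (pi^-1 u)%g); split => //; split; first by exists (pi^-1 u)%g.
by move/selt_inj.
Qed.

Lemma fimg_rcoset n phi (H : FG n -> Prop) g : fhom phi ->
  fimg phi (rcoset H g) = rcoset (fimg phi H) (phi g).
Proof.
move=> Hh; apply: functional_extensionality => y; apply: propositional_extensionality; split.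
  by case=> x [[h [Hh' ->]] ->]; exists (phi h); split; [exists h|rewrite Hh].
by case=> h' [[h [Hh' ->]] ->]; exists (fmul h g); split; [exists h|rewrite Hh].
Qed.

Lemma fimgK n (phi psi : FG n -> FG n) : cancel phi psi -> forall X, fimg psi (fimg phi X) = X.
Proof.
move=> c X; apply: functional_extensionality => y; apply: propositional_extensionality; split.
  by case=> x [[z [Hz ->]] ->]; rewrite c.
by move=> Hy; exists (phi y); split; [exists y|rewrite c].
Qed.

Lemma corr_proof n phi (pi : {perm sidx n}) : fhom phi -> fimg phi (@Ggrp n) = @Ggrp n ->
  (forall s, fimg phi (Gsub s) = Gsub (pi s)) ->
  forall x : CE n, exists g, Ggrp g /\ fimg phi (ccos x) = rcoset (Gsub (pi (ctyp x))) g.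
Proof.
move=> Hh HG HGs x; have [g [Hg Ex]] := ce_repr x.
exists (phi g); split; first by rewrite -HG; exists g.
by rewrite Ex fimg_rcoset // HGs.
Qed.

Definition calpha n phi (pi : {perm sidx n})
  (P : forall x : CE n, exists g, Ggrp g /\ fimg phi (ccos x) = rcoset (Gsub (pi (ctyp x))) g)
  (x : CE n) : CE n :=
  @exist _ (fun p : sidx n * (FG n -> Prop) => exists g, Ggrp g /\ p.2 = rcoset (Gsub p.1) g)
    (pi (ctyp x), fimg phi (ccos x)) (P x).

Lemma corr n phi psi (pi : {perm sidx n}) : fhom phi -> fhom psi ->
  cancel phi psi -> cancel psi phi -> fimg phi (@Ggrp n) = @Ggrp n ->
  (forall s, fimg phi (Gsub s) = Gsub (pi s)) ->
  exists alpha : CE n -> CE n,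
    is_correlation (@ctyp n (sidx n) (@Ggrp n) (@Gsub n)) (@cinc n (sidx n) (@Ggrp n) (@Gsub n)) alpha
    /\ forall (x : CE n) (g : FG n), Ggrp g -> ccos x = rcoset (Gsub (ctyp x)) g ->
       ctyp (alpha x) = pi (ctyp x) /\ ccos (alpha x) = rcoset (fimg phi (Gsub (ctyp x))) (phi g).
Proof.
move=> H1 H2 c1 c2 HG HGs.
have HG' : fimg psi (@Ggrp n) = @Ggrp n by rewrite -{1}HG fimgK.
have HGs' : forall s, fimg psi (Gsub s) = Gsub ((pi^-1)%g s).
  by move=> s; rewrite -{1}(permKV pi s) -HGs fimgK.
pose alpha := calpha (corr_proof H1 HG HGs).
pose beta := calpha (corr_proof H2 HG' HGs').
exists alpha; split; last first.
  by move=> x g Hg Ex; split => //; change (fimg phi (ccos x) = rcoset (fimg phi (Gsub (ctyp x))) (phi g)); rewrite Ex fimg_rcoset.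
split.
  exists beta => x.
    apply: (@ce_eq n (beta (alpha x)) x).
      by change ((pi^-1)%g (pi (ctyp x)) = ctyp x); rewrite permK.
    by change (fimg psi (fimg phi (ccos x)) = ccos x); rewrite fimgK.
  apply: (@ce_eq n (alpha (beta x)) x).
    by change (pi ((pi^-1)%g (ctyp x)) = ctyp x); rewrite permKV.
  by change (fimg phi (fimg psi (ccos x)) = ccos x); rewrite fimgK.
split.
  by move=> x y; change (ctyp x = ctyp y <-> pi (ctyp x) = pi (ctyp y)); split => [->|/perm_inj].
move=> x y.
change ((ctyp x <> ctyp y /\ exists z, ccos x z /\ ccos y z) <->
  (pi (ctyp x) <> pi (ctyp y) /\ exists z, fimg phi (ccos x) z /\ fimg phi (ccos y) z)).
split.
  case=> Ht [z [Hz1 Hz2]]; split; first by move/perm_inj.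
  by exists (phi z); split; exists z.
case=> Ht [z [[a [Ha ->]] [b [Hb Eb]]]].
have Eab : a = b by apply: (can_inj c1).
split; first by move=> E; apply: Ht; rewrite E.
by exists a; split => //; rewrite Eab.
Qed.

Theorem mainTheorem9 (n : nat) (hn : 2 <= n) :
  let G := @Ggrp n in
  let Gs := @Gsub n in
  is_geometry (@ctyp n (sidx n) G Gs) (@cinc n (sidx n) G Gs)
  /\ residually_connected (@ctyp n (sidx n) G Gs) (@cinc n (sidx n) G Gs)
  /\ flag_transitive G Gs
  /\ (forall phi : FG n -> FG n, Kgrp phi ->
        fimg phi G = G
        /\ exists pi : {perm sidx n},
             (forall s, fimg phi (Gs s) = Gs (pi s))
             /\ exists alpha : coset_elt G Gs -> coset_elt G Gs,
                  is_correlation (@ctyp n (sidx n) G Gs) (@cinc n (sidx n) G Gs) alpha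
                  /\ forall (x : coset_elt G Gs) (g : FG n),
                       G g -> ccos x = rcoset (Gs (ctyp x)) g ->
                       ctyp (alpha x) = pi (ctyp x)
                       /\ ccos (alpha x) = rcoset (fimg phi (Gs (ctyp x))) (phi g)).
Proof.
move=> G Gs; subst G Gs.
split; first exact: geometry.
split; first exact: resconn.
split; first exact: flag_trans.
move=> phi Kphi.
have [Hh [[psi [c1 c2]] [pi Epi]]] := Kgrp_Kinv hn Kphi.
have HG := Kinv_G Hh Epi; have HGs := Kinv_Gs Hh Epi.
have [Hpsi _] := Kinv_inv (Kgrp_Kinv hn Kphi) c1 c2.
split => //; exists pi; split => //.
exact: corr Hh Hpsi c1 c2 HG HGs.
Qed.
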